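(* Let $c>0,\Delta>0$ be universal constants such that for all $A\ge0$, $\sigma>0$, all $m_1,m_2$, all $x$ with $|m_1(x)-m_2(x)|/\sqrt{\sigma^2+A}\le\Delta$ and all $t$, one has $\frac12[L(t;m_1,A\mid x)+L(t;m_2,A\mid x)]\ge c\frac{\sigma^4}{(\sigma^2+A)^2}(m_1(x)-m_2(x))^2$. Then for all $m_1,m_2:\mathcal{X}\to\mathbb{R}$ and any $t:\mathcal{X}\times\mathbb{R}\to\mathbb{R}$, writing $$R:=c\,\frac{\sigma^4}{(\sigma^2+A)^2}\int\big(m_1(x)-m_2(x)\big)^2\,\mathbf{1}\Big\{\frac{(m_1(x)-m_2(x))^2}{\sigma^2+A}\le\Delta^2\Big\}\,d\mathbb{P}^X(x),$$ the implication $L(t;m_1,A)<R\ \Longrightarrow\ L(t;m_2,A)\ge R$ holds.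
   Context: Model: $X\sim\mathbb{P}^X$, $\mu\mid X\sim N(m(X),A)$, $Z\mid\mu\sim N(\mu,\sigma^2)$. Bayes rule $t^*_{m,A}(x,z)=\frac{A}{\sigma^2+A}z+\frac{\sigma^2}{\sigma^2+A}m(x)$. Pointwise excess risk $L(t;m,A\mid x)=\mathbb{E}_{m,A}[(t(x,Z)-\mu)^2-(t^*_{m,A}(x,Z)-\mu)^2\mid X=x]$, and $L(t;m,A)=\int L(t;m,A\mid x)\,d\mathbb{P}^X(x)$ (the excess risk of $t$ over the Bayes rule for a fresh draw $(X,\mu,Z)$). Such constants $c,\Delta$ exist (Lemma 2 of the paper). *)

(* Defs.v *)
From HB Require Import structures.
From mathcomp Require Import all_boot all_order all_algebra.
From mathcomp Require Import all_classical all_reals all_analysis.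
Set Implicit Arguments. Unset Strict Implicit. Unset Printing Implicit Defensive.
Import Order.TTheory GRing.Theory Num.Theory.
Local Open Scope classical_set_scope.
Local Open Scope ring_scope.

Section defs.
Context {R : realType} {d : measure_display} {T : measurableType d}.

Definition bayes_rule (s A : R) (m : T -> R) (x : T) (z : R) : R :=
  A / (s ^+ 2 + A) * z + s ^+ 2 / (s ^+ 2 + A) * m x.

(* Expectation of g(mu) for mu ~ N(a, A) (variance A >= 0); for A = 0
   the law is the Dirac mass at a, so the expectation is g a. *)
Definition prior_expect (a A : R) (g : R -> \bar R) : \bar R :=
  if A == 0 then g a
  else (\int[normal_prob a (Num.sqrt A)]_u g u)%E.

(* Pointwise excess risk L(t; m, A | x):
   E[(t(x,Z)-mu)^2 - (t*(x,Z)-mu)^2 | X = x] with mu | X=x ~ N(m x, A)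
   and Z | mu ~ N(mu, s^2) (normal_prob takes the standard deviation s). *)
Definition excess_risk_pt (s A : R) (t : T -> R -> R) (m : T -> R) (x : T)
  : \bar R :=
  prior_expect (m x) A (fun u =>
    (\int[normal_prob u s]_z
       ((t x z - u) ^+ 2 - (bayes_rule s A m x z - u) ^+ 2)%:E)%E).

Definition excess_risk (PX : probability T R) (s A : R) (t : T -> R -> R)
  (m : T -> R) : \bar R :=
  (\int[PX]_x excess_risk_pt s A t m x)%E.

End defs.

(* Main.v *)
Require Import Defs.
From HB Require Import structures.
From mathcomp Require Import all_boot all_order all_algebra.
From mathcomp Require Import all_classical all_reals all_analysis.
From mathcomp Require Import measurable_realfun.
From mathcomp Require Import lra.
Import Order.TTheory GRing.Theory Num.Theory.
Local Open Scope classical_set_scope.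
Local Open Scope ring_scope.

Section helpers_e.
Local Set Implicit Arguments.
Local Unset Strict Implicit.
Local Open Scope ereal_scope.
Import HBNNSimple.

Lemma normal_cov (R : realType) (mm s : R) (f : R -> \bar R) :
  (forall x, 0 <= f x) -> measurable_fun setT f ->
  \int[normal_prob mm s]_x f x =
  \int[lebesgue_measure]_x (f x * (normal_pdf mm s x)%:E).
Proof.
move=> f0 mf; set g := fun x => (normal_pdf mm s x)%:E.
have mg : measurable_fun setT g.
  by apply/measurable_EFinP; exact: measurable_normal_pdf.
have g0 x : 0 <= g x by rewrite lee_fin normal_pdf_ge0.
pose h := nnsfun_approx measurableT mf.
have -> : \int[normal_prob mm s]_x f x =
    lim (\int[normal_prob mm s]_x (EFin \o h n) x @[n --> \oo]).
  have fE x : f x = lim ((EFin \o h n) x @[n --> \oo]).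
    by apply/esym/cvg_lim => //; exact: cvg_nnsfun_approx.
  under eq_integral => x _ do rewrite fE.
  apply: monotone_convergence => //.
  - move=> n; apply/measurable_EFinP. exact: (measurable_funPT (h n)).
  - by move=> n x _ //=; rewrite lee_fin.
  - by move=> x _ a b ab; rewrite lee_fin; exact/lefP/(nd_nnsfun_approx measurableT mf).
have -> : \int[lebesgue_measure]_x (f x * g x) =
    lim (\int[lebesgue_measure]_x ((EFin \o h n) \* g) x @[n --> \oo]).
  have fg x : f x * g x = lim (((EFin \o h n) \* g) x @[n --> \oo]).
    by apply/esym/cvg_lim => //; apply: cvgeZr;
      [by []|exact: cvg_nnsfun_approx].
  under eq_integral => x _ do rewrite fg.
  apply: monotone_convergence => [//| | |].
  - move=> n; apply/emeasurable_funM => //.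
    apply/measurable_EFinP; exact: (measurable_funPT (h n)).
  - by move=> n x _ /=; apply: mule_ge0; [rewrite lee_fin; exact: fun_ge0|exact: g0].
  - move=> x _ a b ab/=; apply: lee_wpmul2r; first exact: g0. rewrite lee_fin; exact/lefP/(nd_nnsfun_approx measurableT mf).
suff suf n : \int[lebesgue_measure]_x ((EFin \o h n) x * g x) =
    \int[normal_prob mm s]_x (EFin \o h n) x.
  by apply: congr_lim; apply/funext => n; rewrite suf.
transitivity (\int[normal_prob mm s]_x
   (\sum_(y \in range (h n)) (y * \1_(h n @^-1` [set y]) x)%:E)); last first.
  by apply: eq_integral => t _; rewrite /= fimfunE -fsumEFin.
have indich m r : measurable_fun setT (fun x => (r * \1_(h m @^-1` [set r]) x)%:E).
  by apply: (measurable_comp measurableT) => //; exact: measurable_funM.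
rewrite ge0_integral_fsum//; last 2 first.
  - by move=> m; exact: indich.
  - by move=> m y Ey; exact: nnfun_muleindic_ge0.
transitivity (\int[lebesgue_measure]_x (\sum_(y \in range (h n))
    (y * \1_(h n @^-1` [set y]) x)%:E * g x)).
  under [RHS]eq_integral => x xE.
    rewrite -ge0_mule_fsuml => [|y]; last exact: nnfun_muleindic_ge0.
    rewrite fsumEFin // -(fimfunE (h n) x); over.
  by [].
rewrite ge0_integral_fsum//; last 2 first.
  - by move=> y; apply: emeasurable_funM; [exact: indich|exact: mg].
  - by move=> m y Ey; rewrite mule_ge0 ?nnfun_muleindic_ge0.
apply: eq_fsbigr => r rhn.
under [RHS]eq_integral do rewrite EFinM.
have r0 : (0 <= r)%R by move: rhn; rewrite inE => -[t _ <-]; exact: fun_ge0.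
have mA : measurable (h n @^-1` [set r]).
  by apply: measurable_funPTI.
rewrite [RHS]ge0_integralZl//; last first.
  by apply/measurable_EFinP; exact: measurable_indic.
under eq_integral do rewrite EFinM -muleA.
rewrite ge0_integralZl//; last first.
  - by move=> x _; apply: mule_ge0; [rewrite lee_fin indicE|exact: g0].
  - by apply: emeasurable_funM => //; apply/measurable_EFinP; exact: measurable_indic.
congr (_ * _).
rewrite integral_indic// setIT /normal_prob [RHS]integral_mkcond.
apply: eq_integral => x _; rewrite /patch indicE.
by case: (x \in _); rewrite ?mul1e ?mul0e.
Qed.

Lemma meas_pdf d (X : measurableType d) (R : realType) (mean : X -> R) (s : R) :
  s != 0%R -> measurable_fun setT mean ->
  measurable_fun setT (fun p : X * R => normal_pdf (mean p.1) s p.2).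
Proof.
move=> s0 mm; rewrite /normal_pdf (negbTE s0) /normal_fun.
apply: measurable_funM => //.
apply: measurableT_comp; first exact: measurable_expR.
apply: measurable_funM => //.
apply: measurable_funN.
apply: measurable_funX.
apply: measurable_funB; first exact: measurable_snd.
exact: measurableT_comp mm measurable_fst.
Qed.

Lemma meas_param_ge0 d (X : measurableType d) (R : realType) (mean : X -> R) (s : R)
  (G : X * R -> \bar R) :
  s != 0%R -> measurable_fun setT mean -> measurable_fun setT G ->
  (forall p, 0 <= G p) ->
  measurable_fun setT (fun x => \int[normal_prob (mean x) s]_z G (x, z)).
Proof.
move=> s0 mm mG G0.
have -> : (fun x => \int[normal_prob (mean x) s]_z G (x, z)) =
  fubini_F lebesgue_measure (fun p => G p * (normal_pdf (mean p.1) s p.2)%:E).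
  apply/funext => x; rewrite normal_cov //.
  exact: measurable_fun_pair2.
apply: measurable_fun_fubini_tonelli_F.
- apply: emeasurable_funM => //.
  by apply/measurable_EFinP; exact: meas_pdf.
- by move=> p; apply: mule_ge0 => //; rewrite lee_fin normal_pdf_ge0.
Qed.

Lemma meas_param d (X : measurableType d) (R : realType) (mean : X -> R) (s : R)
  (F : X * R -> \bar R) :
  s != 0%R -> measurable_fun setT mean -> measurable_fun setT F ->
  measurable_fun setT (fun x => \int[normal_prob (mean x) s]_z F (x, z)).
Proof.
move=> s0 mm mF.
have -> : (fun x => \int[normal_prob (mean x) s]_z F (x, z)) =
  (fun x => \int[normal_prob (mean x) s]_z F^\+ (x, z) -
            \int[normal_prob (mean x) s]_z F^\- (x, z)).
  apply/funext => x; rewrite integralE; congr (_ - _).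
  by apply: eq_integral => z _; rewrite !funeposE.
  by apply: eq_integral => z _; rewrite !funenegE.
apply: (emeasurable_funB (f := fun x => \int[normal_prob (mean x) s]_z F^\+ (x, z))
  (g := fun x => \int[normal_prob (mean x) s]_z F^\- (x, z))).
- exact: (meas_param_ge0 (G:=F^\+) s0 mm (measurable_funepos mF) (fun p => funepos_ge0 F p)).
- exact: (meas_param_ge0 (G:=F^\-) s0 mm (measurable_funeneg mF) (fun p => funeneg_ge0 F p)).
Qed.

End helpers_e.

Section helpers_r.
Local Set Implicit Arguments.
Local Unset Strict Implicit.
Lemma meas_erpt (R : realType) d (T : measurableType d) (s A : R)
  (t : T -> R -> R) (m : T -> R) : 0 < s -> 0 <= A ->
  measurable_fun setT m -> measurable_fun setT (fun p : T * R => t p.1 p.2) ->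
  measurable_fun setT (excess_risk_pt s A t m).
Proof.
move=> s0 A0 mm mt.
pose I := fun p : T * R => (\int[normal_prob p.2 s]_z
   ((t p.1 z - p.2) ^+ 2 - (bayes_rule s A m p.1 z - p.2) ^+ 2)%:E)%E.
have mI : measurable_fun setT I.
  apply: (meas_param (mean := snd) (F := fun q : (T * R) * R =>
    ((t q.1.1 q.2 - q.1.2) ^+ 2 - (bayes_rule s A m q.1.1 q.2 - q.1.2) ^+ 2)%:E)).
  - by rewrite gt_eqF.
  - exact: measurable_snd.
  apply/measurable_EFinP.
  have m11 : measurable_fun setT (fun q : (T * R) * R => q.1.1).
    exact: measurableT_comp measurable_fst measurable_fst.
  have m12 : measurable_fun setT (fun q : (T * R) * R => q.1.2).
    exact: measurableT_comp measurable_snd measurable_fst.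
  apply: measurable_funB; apply: measurable_funX; apply: measurable_funB => //.
  - have H := measurableT_comp mt (measurable_fun_pair m11 measurable_snd).
    exact: H.
  - rewrite /bayes_rule; apply: measurable_funD.
      by apply: measurable_funM => //; exact: measurable_snd.
    by apply: measurable_funM => //; exact: measurableT_comp mm m11.
rewrite /excess_risk_pt /prior_expect.
have [A0e|An0] := boolP (A == 0).

  have H := measurableT_comp mI (measurable_fun_pair (@measurable_id _ T setT) mm).
  exact: H.

apply: (meas_param (mean := m) (F := I)) => //.
by rewrite gt_eqF // sqrtr_gt0 lt_neqAle eq_sym An0 A0.
Qed.

End helpers_r.

Lemma half_ge0 (R : realType) (a : \bar R) :
  (0 <= 2^-1%:E * (a + a))%E -> (0 <= a)%E.
Proof.
case: a => [r| |] //=.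
  rewrite -EFinD -EFinM !lee_fin => h.
  have : 0 <= r + r by move: h; rewrite pmulr_rge0 // invr_gt0.
  lra.
by rewrite mulrNy sgrV gtr0_sg // mul1e.
Qed.

Theorem lemma3 (R : realType) (d : measure_display) (T : measurableType d)
  (PX : probability T R) (c Delta : R) :
  0 < c -> 0 < Delta ->
  (forall (A s : R) (m1 m2 : T -> R) (x : T) (t : T -> R -> R),
      0 <= A -> 0 < s ->
      measurable_fun [set: R] (t x) ->
      `|m1 x - m2 x| / Num.sqrt (s ^+ 2 + A) <= Delta ->
      ((c * s ^+ 4 / (s ^+ 2 + A) ^+ 2 * (m1 x - m2 x) ^+ 2)%:E <=
       2^-1%:E * (excess_risk_pt s A t m1 x + excess_risk_pt s A t m2 x))%E) ->
  forall (A s : R), 0 <= A -> 0 < s ->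
  forall (m1 m2 : T -> R) (t : T -> R -> R),
    measurable_fun [set: T] m1 -> measurable_fun [set: T] m2 ->
    measurable_fun [set: T * R] (fun p : T * R => t p.1 p.2) ->
    let Rbound : \bar R :=
      ((c * s ^+ 4 / (s ^+ 2 + A) ^+ 2)%:E *
       \int[PX]_x
         (if (m1 x - m2 x) ^+ 2 / (s ^+ 2 + A) <= Delta ^+ 2
          then (m1 x - m2 x) ^+ 2 else 0)%:E)%E in
    (excess_risk PX s A t m1 < Rbound)%E ->
    (Rbound <= excess_risk PX s A t m2)%E.
Proof.
move=> c0 D0 hyp A s A0 s0 m1 m2 t mm1 mm2 mt Rb HL1.
have mtx x : measurable_fun [set: R] (t x).
  exact: (measurable_fun_pair2 x mt).
have S0 : 0 < s ^+ 2 + A by rewrite ltr_wpDr // exprn_gt0.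
set k := c * s ^+ 4 / (s ^+ 2 + A) ^+ 2.
have k0 : 0 <= k by rewrite /k divr_ge0 ?mulr_ge0 ?exprn_ge0 ?ltW.
have pos m x : (0 <= excess_risk_pt s A t m x)%E.
  apply: half_ge0.
  have := hyp A s m m x t A0 s0 (mtx x).
  rewrite subrr normr0 mul0r expr0n /= mulr0 => h.
  exact: h (ltW D0).
set g := fun x => if (m1 x - m2 x) ^+ 2 / (s ^+ 2 + A) <= Delta ^+ 2
          then (m1 x - m2 x) ^+ 2 else 0.
have g0 x : 0 <= g x by rewrite /g; case: ifP => _ //; exact: sqr_ge0.
have mg : measurable_fun setT g.
  apply: measurable_fun_ifT.
  - apply: measurable_fun_ler => //.
    apply: measurable_funM => //.
    by apply: measurable_funX; exact: measurable_funB.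
  - by apply: measurable_funX; exact: measurable_funB.
  - exact: measurable_cst.
have key x : ((k * g x)%:E <= 2^-1%:E *
    (excess_risk_pt s A t m1 x + excess_risk_pt s A t m2 x))%E.
  rewrite /g; case: ifP => hc.
    apply: hyp => //.
    rewrite -(@ler_sqr _ _ Delta) ?nnegrE ?(ltW D0) ?divr_ge0 ?sqrtr_ge0 //.
    rewrite expr_div_n real_normK ?num_real // sqr_sqrtr ?(ltW S0) //.
  by rewrite mulr0; apply: mule_ge0; [rewrite lee_fin| apply: adde_ge0].
have mf m : measurable_fun setT m -> measurable_fun setT (excess_risk_pt s A t m).
  by move=> mm; exact: meas_erpt.
have LE : (Rb <= 2^-1%:E * (excess_risk PX s A t m1 + excess_risk PX s A t m2))%E.
  rewrite /Rb -ge0_integralZl //; last first.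
    - by move=> x _; rewrite lee_fin; exact: g0.
    - by apply/measurable_EFinP; exact: mg.
  rewrite /excess_risk -ge0_integralD //; try (by move=> x _; exact: pos);
    try (by apply: mf).
  rewrite -ge0_integralZl //; try (by move=> x _; apply: adde_ge0);
    try (by apply: emeasurable_funD; apply: mf); try (by rewrite lee_fin).
  apply: ge0_le_integral => //;
    try (by move=> x _; rewrite -EFinM lee_fin mulr_ge0);
    try (by move=> x _; apply: mule_ge0; [rewrite lee_fin | apply: adde_ge0]);
    try (by move=> x _; rewrite -EFinM; exact: key);
    try (by apply/measurable_EFinP; apply: measurable_funM);
    try (by apply: emeasurable_funM => //; apply: emeasurable_funD; apply: mf).
  by move=> x _; apply: mule_ge0; rewrite lee_fin; [exact: k0 | exact: g0].
have L10 : (0 <= excess_risk PX s A t m1)%E.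
  by apply: integral_ge0 => x _; exact: pos.
have L20 : (0 <= excess_risk PX s A t m2)%E.
  by apply: integral_ge0 => x _; exact: pos.
move: LE HL1 L10 L20.
case: (excess_risk PX s A t m2) => [r2| |] h1 h2 h3 h4; last 2 first.
- by rewrite leey.
- by move: h4; rewrite leeNy_eq.
move: h1 h2 h3.
case: (excess_risk PX s A t m1) => [r1| |] h1 h2 h3; last 2 first.
- by move: h2; rewrite ltNge leey.
- by move: h3; rewrite leeNy_eq.
move: h1 h2.
case: Rb => [rb| |] h1 h2; last 2 first.
- by move: h1; rewrite -EFinD -EFinM leye_eq.
- by move: h2; rewrite ltNge leNye.
move: h1 h2 h3 h4.
rewrite -EFinD -EFinM !lee_fin !lte_fin => h1 h2 h3 h4.
lra.
Qed.
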